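(* Let $e\geqslant 1$ be an integer and $b\geqslant 2$ an even integer, and let $D_{e,b}$ be the cycle set for $T_{e,b}$. Assume that for every $x\in D_{e,b}$ there exists a positive integer $h_x$ such that both $h_x+1$ and $h_x+x$ are $(e,b)$-happy. Then there exists a positive integer $h$ such that $h+x$ is $(e,b)$-happy for every $x\in D_{e,b}$.
   Context: For a positive integer $n=\sum_{j=0}^k a_j b^j$ with $0\leqslant a_j<b$, $T_{e,b}(n)=\sum_{j=0}^k a_j^e$; $T_{e,b}^r$ is the $r$-th iterate, $T_{e,b}^0(n)=n$. A positive integer $n$ is $(e,b)$-happy if $T_{e,b}^r(n)=1$ for some $r\geqslant 0$. A set $D_{e,b}$ of positive integers is a cycle set for $T_{e,b}$ if (1) for every positive integer $n$ there is $r\geqslant 0$ with $T_{e,b}^r(n)\in D_{e,b}$; (2) $T_{e,b}(x)\in D_{e,b}$ for all $x\in D_{e,b}$; (3) for every $x\in D_{e,b}$ there is $r\geqslant 1$ with $T_{e,b}^r(x)=x$. Such a set is finite and uniquely determined (it is the set of positive integers $x$ with $T_{e,b}^r(x)=x$ for some $r\geqslant1$). *)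

(* Defs.v *)
From mathcomp Require Import all_boot.
Set Implicit Arguments. Unset Strict Implicit. Unset Printing Implicit Defensive.

(* Sum of the e-th powers of the base-b digits of n, computed with fuel k
   (k >= n suffices, since each step divides by b >= 2). *)
Fixpoint Tfuel (k e b n : nat) : nat :=
  match k with
  | 0 => 0
  | k'.+1 => if n == 0 then 0 else (n %% b) ^ e + Tfuel k' e b (n %/ b)
  end.

Definition T (e b n : nat) : nat := Tfuel n e b n.

Definition happy (e b n : nat) : Prop := 0 < n /\ exists r, iter r (T e b) n = 1.

Definition is_cycle_set (e b : nat) (D : nat -> Prop) : Prop :=
  (forall x, D x -> 0 < x) /\
  (forall n, 0 < n -> exists r, D (iter r (T e b) n)) /\
  (forall x, D x -> D (T e b x)) /\
  (forall x, D x -> exists r, 0 < r /\ iter r (T e b) x = x).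

(* Main.v *)
Require Import Defs.
From mathcomp Require Import all_boot zify.
From Stdlib Require Import Classical.

Lemma bound_ex (f : nat -> nat) N : exists M, forall p, p < N -> f p <= M.
Proof.
elim: N => [|N [M HM]]; first by exists 0.
exists (maxn M (f N)) => p; rewrite ltnS leq_eqVlt => /orP [/eqP -> | /HM]; lia.
Qed.


Section S.
Variables (e b : nat) (He : 0 < e) (Hb : 1 < b).

Lemma Tfuel_eq n k1 k2 : n <= k1 -> n <= k2 -> Tfuel k1 e b n = Tfuel k2 e b n.
Proof.
elim: k1 n k2 => [|k1 IH] n [|k2] /=.
- by [].
- by rewrite leqn0 => /eqP -> _.
- by move=> _; rewrite leqn0 => /eqP ->.
- move=> h1 h2; case: eqP => // /eqP hn.
  have hd : n %/ b < n by apply: ltn_Pdiv; rewrite // lt0n.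
  by rewrite (IH _ k2) //; lia.
Qed.

Lemma T0 : T e b 0 = 0. Proof. by []. Qed.

Lemma T_rec n : T e b n = (n %% b) ^ e + T e b (n %/ b).
Proof.
case: n => [|n]; first by rewrite mod0n div0n exp0n.
rewrite /T /=. congr (_ + _). apply: Tfuel_eq => //.
have : n.+1 %/ b < n.+1 by apply: ltn_Pdiv.
lia.
Qed.

Lemma T1 : T e b 1 = 1.
Proof. by rewrite T_rec modn_small // divn_small // T0 exp1n. Qed.

Lemma T_cat k m c : c < b ^ k -> T e b (m * b ^ k + c) = T e b m + T e b c.
Proof.
elim: k m c => [|k IH] m c.
  by rewrite expn0 ltnS leqn0 => /eqP ->; rewrite muln1 addn0 T0 addn0.
move=> hc.
have hb0 : 0 < b by lia.
rewrite T_rec expnSr mulnA modnMDl divnMDl // IH; last by rewrite ltn_divLR // -expnSr.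
by rewrite [T e b c]T_rec addnCA.
Qed.

Fixpoint rep H := if H is H'.+1 then rep H' * b + 1 else 0.

Lemma T_rep H : T e b (rep H) = H.
Proof.
elim: H => [|H IH] //=.
by rewrite -{2}(expn1 b) T_cat ?expn1 // IH T1 addn1.
Qed.

Lemma rep_gt0 H : 0 < H -> 0 < rep H.
Proof. by case: H => //= H _; rewrite addn1. Qed.

Lemma T_lin : exists K, forall n, 2 * T e b n <= n + K.
Proof.
set C := b ^ e.
have hC : 0 < C by rewrite expn_gt0; lia.
have [M HM] := bound_ex (T e b) (4 * C).
exists (2 * M).
suff H : forall N n, n <= N -> 2 * T e b n <= n + 2 * M by move=> n; exact: (H n).
elim => [|N IH] n hn.
  by move: hn; rewrite leqn0 => /eqP ->; rewrite T0.
case: (ltnP n (4 * C)) => hn4; first by have := HM _ hn4; lia.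
have hd : (n %% b) ^ e <= C by rewrite leq_exp2r //; have := ltn_pmod n (ltnW Hb); lia.
have hx : n %/ b * 2 <= n by apply: leq_trans (leq_divM n b); rewrite leq_mul2l; lia.
have hxn : n %/ b < n by apply: ltn_Pdiv => //; lia.
have := IH (n %/ b) ltac:(lia).
move=> h; rewrite (T_rec n); lia.
Qed.

Lemma iter_T1 r : iter r (T e b) 1 = 1.
Proof. by elim: r => //= r ->; rewrite T1. Qed.

Lemma iter_ge1 n r0 r : r0 <= r -> iter r0 (T e b) n = 1 -> iter r (T e b) n = 1.
Proof. by move=> h h1; rewrite -(subnK h) iterD h1 iter_T1. Qed.

Lemma happy_back n R : 0 < n -> happy e b (iter R (T e b) n) -> happy e b n.
Proof. by move=> hn [_ [r hr]]; split => //; exists (r + R); rewrite iterD. Qed.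

Lemma step_lift A M : 0 < A -> exists G, 0 < G /\ forall c, c <= M -> T e b (G + c) = A + T e b c.
Proof.
move=> hA; exists (rep A * b ^ M); split.
  by rewrite muln_gt0 rep_gt0 // expn_gt0; lia.
move=> c hc; rewrite T_cat // ?T_rep //.
by apply: leq_ltn_trans hc (ltn_expl _ Hb).
Qed.

Lemma lift R : forall H M, 0 < H -> exists G, 0 < G /\
  forall c, c <= M -> iter R (T e b) (G + c) = H + iter R (T e b) c.
Proof.
elim: R => [|R IH] H M hH; first by exists H.
have [M' HM'] := bound_ex (T e b) M.+1.
have [G [hG HG]] := IH H M' hH.
have [G' [hG' HG']] := step_lift G M hG.
exists G'; split => // c hc.
by rewrite !iterSr HG' // HG // HM'.
Qed.


Lemma fin_max (P : nat -> nat -> Prop) (S : seq nat) :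
  (forall x, x \in S -> exists r0, forall r, r0 <= r -> P x r) ->
  exists R, forall x, x \in S -> forall r, R <= r -> P x r.
Proof.
elim: S => [|y S IH] H; first by exists 0.
have [R HR] := IH (fun x hx => H x (mem_behead (s:=y::S) hx)).
have [r0 Hr0] := H y (mem_head _ _).
exists (maxn R r0) => x; rewrite inE => /orP [/eqP -> | hx] r hr.
  by apply: Hr0; lia.
by apply: HR => //; lia.
Qed.

Lemma bound_seq (f : nat -> nat) (S : seq nat) : exists M, forall x, x \in S -> f x <= M.
Proof.
elim: S => [|y S [M HM]]; first by exists 0.
exists (maxn M (f y)) => x; rewrite inE => /orP [/eqP -> | /HM]; lia.
Qed.

Variable D : nat -> Prop.
Hypothesis HD : is_cycle_set e b D.

Lemma D_iter x r : D x -> D (iter r (T e b) x).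
Proof. by move=> hx; elim: r => //= r; case: HD => _ [_ [h _]]; exact: h. Qed.

Lemma D1 : D 1.
Proof. case: HD => _ [h _]; have [r] := h 1 isT. by rewrite iter_T1. Qed.

Lemma D_bounded : exists B, forall x, D x -> x <= B.
Proof.
have [K HK] := T_lin.
set N0 := K.+1.
have [M HM] := bound_ex (T e b) N0.
exists (maxn N0 M).
have small n : n <= maxn N0 M -> T e b n <= maxn N0 M.
  move=> hn; case: (ltnP n N0) => h; first by have := HM _ h; lia.
  have := HK n; lia.
have big n : maxn N0 M < n -> T e b n < n by move=> hn; have := HK n; lia.
have itb i n : iter i (T e b) n <= maxn n (maxn N0 M).
  elim: i => [|i IH] /=; first by lia.
  case: (leqP (iter i (T e b) n) (maxn N0 M)) => h.
    by have := small _ h; lia.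
  by have := big _ h; lia.
move=> x hx; case: HD => _ [_ [_ H4]].
have [[|r] [hr hxr]] := H4 x hx => //.
rewrite leqNgt; apply/negP => hB.
have := itb r (T e b x); rewrite -iterSr hxr.
have := big _ hB; lia.
Qed.

Lemma D_enum : exists S : seq nat, forall x, D x <-> x \in S.
Proof.
have [B HB] := D_bounded.
suff H : forall n, exists S : seq nat, forall x, (D x /\ x < n) <-> x \in S.
  have [S HS] := H B.+1; exists S => x; rewrite -HS; split => [h|[]//].
  by split => //; rewrite ltnS HB.
elim => [|n [S HS]]; first by exists [::] => x; split => [[]|].
case: (classic (D n)) => hn.
- exists (n :: S) => x; rewrite inE; split.
    case=> hx; rewrite ltnS leq_eqVlt => /orP [->//| h].
    by apply/orP; right; apply/HS.
  case/orP => [/eqP -> | /HS [h1 h2]]; split => //; lia.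
- exists S => x; split.
    case=> hx; rewrite ltnS leq_eqVlt => /orP [/eqP h|h]; first by subst.
    by apply/HS.
  by move/HS => [h1 h2]; split => //; lia.
Qed.

Hypothesis Hhx : forall x, D x -> exists hx, 0 < hx /\ happy e b (hx + 1) /\ happy e b (hx + x).

Lemma claim n : forall S : seq nat, size (undup (1 :: S)) <= n ->
  (forall x, x \in S -> D x) ->
  exists h, 0 < h /\ forall x, x \in S -> happy e b (h + x).
Proof.
elim: n => [|n IHn] S hsz hSD.
  have : 1 \in undup (1 :: S) by rewrite mem_undup mem_head.
  by move: hsz; rewrite leqn0 size_eq0 => /eqP ->.
case hS: (has (fun y => y != 1) S); last first.
  have [h1 [h1p [Hh1 _]]] := Hhx _ D1.
  exists h1; split => // x hx.
  have : x == 1.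
    apply: contraFT hS => hx1; apply/hasP; by exists x.
  by move/eqP => ->.
have [y hyS hy1] := hasP hS.
have [hy [hyp [Hy1 Hyy]]] := Hhx _ (hSD y hyS).
pose P x r := D (iter r (T e b) (hy + x)) /\ ((x == 1) || (x == y) -> iter r (T e b) (hy + x) = 1).
have [R HR] : exists R, forall x, x \in 1 :: S -> forall r, R <= r -> P x r.
  apply: fin_max => x hx.
  have hxp : 0 < hy + x by lia.
  have [r1 Hr1] : exists r1, D (iter r1 (T e b) (hy + x)).
    by case: HD => _ [h _]; apply: h.
  have [r2 Hr2] : exists r2, (x == 1) || (x == y) -> iter r2 (T e b) (hy + x) = 1.
    case: (boolP ((x == 1) || (x == y))) => [/orP [/eqP -> | /eqP ->] | _].
    - by case: Hy1 => _ [r hr]; exists r.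
    - by case: Hyy => _ [r hr]; exists r.
    - by exists 0.
  exists (maxn r1 r2) => r hr; split.
    by rewrite -(subnK (leq_trans (leq_maxl r1 r2) hr)) iterD; apply: D_iter.
  by move=> hxy; apply: (iter_ge1 _ r2) => //; [lia | exact: Hr2].
have HR' x (hx : x \in 1 :: S) := HR x hx R (leqnn R).
pose phi x := iter R (T e b) (hy + x).
have phi1 : phi 1 = 1 by have [_ h] := HR' 1 (mem_head _ _); apply: h; rewrite eqxx.
have phiy : phi y = 1.
  by have [_ h] := HR' y (mem_behead (s := 1 :: S) hyS); apply: h; rewrite eqxx orbT.
set L := undup (1 :: S).
have yL : y \in L by rewrite mem_undup inE hyS orbT.
have oneL : 1 \in rem y L.
  by rewrite (mem_rem_uniq _ (undup_uniq _)) inE eq_sym hy1 mem_undup mem_head.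
have [H [Hp HH]] : exists H, 0 < H /\ forall z, z \in map phi S -> happy e b (H + z).
  apply: IHn.
    apply: leq_trans (_ : size (map phi (rem y L)) <= n).
      apply: uniq_leq_size; first exact: undup_uniq.
      move=> z; rewrite mem_undup inE => /orP [/eqP -> | /mapP [x hx ->]].
        by rewrite -{1}phi1; apply: map_f.
      case: (eqVneq x y) => [-> | hxy]; first by rewrite phiy -{1}phi1; apply: map_f.
      by apply: map_f; rewrite (mem_rem_uniq _ (undup_uniq _)) inE hxy andTb /L mem_undup inE hx orbT.
    by rewrite size_map size_rem //; move: hsz; rewrite -/L; lia.
  move=> z /mapP [x hx ->]; have [h _] := HR' x (mem_behead (s := 1 :: S) hx); exact: h.
have [M HM] := bound_seq (fun x => hy + x) S.
have [G [hG HG]] := lift R H M Hp.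
exists (G + hy); split; first by lia.
move=> x hx; apply: (happy_back _ R); first by have := hSD x hx; lia.
by rewrite -addnA HG ?HM //; apply: HH; apply: map_f.
Qed.

End S.

Theorem lemma2p2 (e b : nat) (D : nat -> Prop) :
  1 <= e -> 2 <= b -> ~~ odd b ->
  is_cycle_set e b D ->
  (forall x, D x -> exists hx, 0 < hx /\ happy e b (hx + 1) /\ happy e b (hx + x)) ->
  exists h, 0 < h /\ forall x, D x -> happy e b (h + x).
Proof.
move=> He Hb _ HD Hhx.
have [S HS] := D_enum e b He Hb D HD.
have [h [hp Hh]] := claim e b He Hb D HD Hhx _ _ (leqnn _) (fun x hx => proj2 (HS x) hx).
by exists h; split => // x /HS; apply: Hh.
Qed.
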